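(* Let $A\subset\mathbb{N}\setminus\{1\}$. If $L(A)$ is densely lineable in $\ell^\infty$, then $A\cap(A-1)$ is infinite, where $A-1=\{a-1:a\in A\}$. In particular, $L(2\mathbb{N}+1)$ and $L(2\mathbb{N})$ are not densely lineable.
   Context: $\ell^\infty$ is the Banach space of bounded real sequences with the sup norm. For $x\in\ell^\infty$, $L_x$ denotes the set of accumulation points (subsequential limits) of $x$. For a set $A$ of cardinalities, $L(A)=\{x\in\ell^\infty: |L_x|\in A\}$. A subset $Y$ of $\ell^\infty$ is densely lineable if $Y\cup\{0\}$ contains an infinite-dimensional linear subspace that is dense in $\ell^\infty$ (norm topology). *)

(* Defs.v *)
From Stdlib Require Import Reals List.
Import ListNotations.
Open Scope R_scope.

Definition rseq := nat -> R.

Definition bounded (x : rseq) : Prop :=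
  exists M : R, forall n : nat, Rabs (x n) <= M.

Definition acc_point (x : rseq) (a : R) : Prop :=
  exists phi : nat -> nat,
    (forall n, (phi n < phi (S n))%nat) /\ Un_cv (fun n => x (phi n)) a.

Definition has_card (S : R -> Prop) (k : nat) : Prop :=
  exists l : list R, NoDup l /\ length l = k /\ (forall a, In a l <-> S a).

(* L(A) = { x in ell^infty : |L_x| in A }, for A a set of natural numbers. *)
Definition in_LA (A : nat -> Prop) (x : rseq) : Prop :=
  bounded x /\ exists k : nat, A k /\ has_card (acc_point x) k.

Definition zero_seq : rseq := fun _ => 0.

Definition linear_subspace (V : rseq -> Prop) : Prop :=
  (forall x, V x -> bounded x) /\
  V zero_seq /\
  (forall x y, V x -> V y -> V (fun n => x n + y n)) /\
  (forall (c : R) x, V x -> V (fun n => c * x n)).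

Definition lin_indep (m : nat) (v : nat -> rseq) : Prop :=
  forall c : nat -> R,
    (forall k : nat, fold_right Rplus 0 (map (fun i => c i * v i k) (seq 0 m)) = 0) ->
    forall i, (i < m)%nat -> c i = 0.

Definition infinite_dimensional (V : rseq -> Prop) : Prop :=
  forall m : nat, exists v : nat -> rseq,
    (forall i, (i < m)%nat -> V (v i)) /\ lin_indep m v.

Definition dense_in_linf (V : rseq -> Prop) : Prop :=
  forall x : rseq, bounded x -> forall eps : R, eps > 0 ->
    exists y, V y /\ forall n, Rabs (x n - y n) <= eps.

Definition densely_lineable (Y : rseq -> Prop) : Prop :=
  exists V : rseq -> Prop,
    linear_subspace V /\ infinite_dimensional V /\ dense_in_linf V /\
    (forall x, V x -> Y x \/ x = zero_seq).

Definition infinite_nat (P : nat -> Prop) : Prop :=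
  forall N : nat, exists n, (N <= n)%nat /\ P n.

(* 2N+1 and 2N with N = {1,2,3,...}. *)
Definition odd_set : nat -> Prop := fun k => exists m, (1 <= m)%nat /\ k = (2 * m + 1)%nat.
Definition even_set : nat -> Prop := fun k => exists m, (1 <= m)%nat /\ k = (2 * m)%nat.

(* Main.v *)
Require Import Defs.
From Stdlib Require Import Reals List Lra Lia ZArith Arith.
From Stdlib Require Import ClassicalEpsilon Classical.
Require Import Defs.
Open Scope R_scope.

Lemma abs_le_inv a b : Rabs a <= b -> -b <= a <= b.
Proof. unfold Rabs; destruct Rcase_abs; intros; lra. Qed.

Lemma abs_lt_inv a b : Rabs a < b -> -b < a < b.
Proof. unfold Rabs; destruct Rcase_abs; intros; lra. Qed.

Definition sincr (phi : nat -> nat) := forall n, (phi n < phi (S n))%nat.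

Lemma sincr_ge phi : sincr phi -> forall n, (n <= phi n)%nat.
Proof. intros H n; induction n; [lia|]. specialize (H n); lia. Qed.

Lemma sincr_mono phi : sincr phi -> forall n m, (n <= m)%nat -> (phi n <= phi m)%nat.
Proof. intros H n m Hnm; induction Hnm; [lia|]. specialize (H m); lia. Qed.

Lemma sincr_comp phi psi : sincr phi -> sincr psi -> sincr (fun n => phi (psi n)).
Proof.
  intros H1 H2 n. specialize (H2 n).
  assert (H3 := sincr_mono phi H1 (S (psi n)) (psi (S n)) H2).
  specialize (H1 (psi n)); lia.
Qed.

Lemma cv_sub u l phi : sincr phi -> Un_cv u l -> Un_cv (fun n => u (phi n)) l.
Proof.
  intros Hp Hu eps He. destruct (Hu eps He) as [N HN]. exists N.
  intros n Hn. apply HN. pose proof (sincr_ge phi Hp n). lia.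
Qed.

Lemma BW u : (exists M, forall n, Rabs (u n) <= M) ->
  exists phi l, sincr phi /\ Un_cv (fun n => u (phi n)) l.
Proof.
  intros [M HM].
  destruct (Bolzano_Weierstrass u (fun c => -M <= c <= M) (compact_P3 _ _)) as [l Hl].
  { intros n. specialize (HM n). apply abs_le_inv in HM. lra. }
  assert (Hp : forall (N k : nat), exists p, (N <= p)%nat /\ Rabs (u p - l) < / INR (S k)).
  { intros N k. assert (Hk : 0 < / INR (S k)) by (apply Rinv_0_lt_compat, lt_0_INR; lia).
    destruct (Hl (disc l (mkposreal _ Hk)) N) as [p [H1 H2]].
    - exists (mkposreal _ Hk). intros y Hy; exact Hy.
    - exists p; split; auto. }
  set (pick := fun N k => proj1_sig (constructive_indefinite_description _ (Hp N k))).
  assert (Hpick : forall N k, (N <= pick N k)%nat /\ Rabs (u (pick N k) - l) < / INR (S k)).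
  { intros N k. unfold pick. destruct constructive_indefinite_description; simpl; auto. }
  set (phi := fix phi n := match n with O => pick O O | S n' => pick (S (phi n')) (S n') end).
  exists phi, l. split.
  - intros n. simpl. destruct (Hpick (S (phi n)) (S n)); lia.
  - intros eps He.
    destruct (archimed (/ eps)) as [Ha _].
    assert (Hz : (0 <= up (/ eps))%Z).
    { apply le_IZR. assert (0 < / eps) by (apply Rinv_0_lt_compat; lra). lra. }
    exists (Z.to_nat (up (/eps))). intros n Hn. unfold R_dist.
    assert (Hb : Rabs (u (phi n) - l) < / INR (S n)).
    { destruct n; simpl; apply Hpick. }
    assert (HINR : / eps < INR (S n)).
    { rewrite <- (Z2Nat.id _ Hz) in Ha. rewrite <- INR_IZR_INZ in Ha.
      apply le_INR in Hn. rewrite S_INR. lra. }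
    assert (0 < / eps) by (apply Rinv_0_lt_compat; lra).
    assert (/ INR (S n) < eps).
    { rewrite <- (Rinv_inv eps). apply Rinv_lt_contravar; auto.
      apply Rmult_lt_0_compat; lra. }
    lra.
Qed.

Lemma cv_bounds u l lo hi : Un_cv u l ->
  (exists N, forall n, (N <= n)%nat -> lo <= u n <= hi) -> lo <= l <= hi.
Proof.
  intros Hu [N HN].
  split; apply Rnot_lt_le; intros Hc.
  - destruct (Hu (lo - l)) as [N2 H2]; [lra|].
    specialize (H2 (N + N2)%nat ltac:(lia)). specialize (HN (N+N2)%nat ltac:(lia)).
    unfold R_dist in H2. apply Rabs_def2 in H2. lra.
  - destruct (Hu (l - hi)) as [N2 H2]; [lra|].
    specialize (H2 (N + N2)%nat ltac:(lia)). specialize (HN (N+N2)%nat ltac:(lia)).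
    unfold R_dist in H2. apply Rabs_def2 in H2. lra.
Qed.

Lemma cv_eventually u l eps : Un_cv u l -> eps > 0 ->
  exists N, forall n, (N <= n)%nat -> Rabs (u n - l) < eps.
Proof. intros H He. destruct (H eps He) as [N HN]. exists N. exact HN. Qed.

Lemma cv_scal u l c : Un_cv u l -> Un_cv (fun n => c * u n) (c * l).
Proof. intros H. apply (CV_mult (fun _ => c) u c l); auto.
  intros e He; exists O; intros; unfold R_dist; rewrite Rminus_diag, Rabs_R0; lra. Qed.

Definition joint (x w : rseq) (a b : R) : Prop :=
  exists phi, sincr phi /\ Un_cv (fun n => x (phi n)) a /\ Un_cv (fun n => w (phi n)) b.

Lemma bounded_sub u phi : bounded u -> bounded (fun n => u (phi n)).
Proof. unfold bounded; intros [M HM]; exists M; intros n; apply HM. Qed.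

Lemma comb_acc x w al be c : bounded x -> bounded w ->
  (acc_point (fun n => al * x n + be * w n) c <-> exists a b, joint x w a b /\ c = al * a + be * b).
Proof.
  intros Bx Bw; split.
  - intros [phi [Hp Hc]].
    destruct (BW _ (bounded_sub x phi Bx)) as [psi [a [Hpsi Ha]]].
    destruct (BW _ (bounded_sub w (fun n => phi (psi n)) Bw)) as [chi [b [Hchi Hb]]].
    exists a, b. split.
    + exists (fun n => phi (psi (chi n))). split; [|split].
      * apply (sincr_comp (fun n => phi (psi n))); auto. apply sincr_comp; auto.
      * apply (cv_sub (fun n => x (phi (psi n)))); auto.
      * exact Hb.
    + set (th := fun n => phi (psi (chi n))).
      assert (Hth : sincr th).
      { apply (sincr_comp (fun n => phi (psi n))); auto. apply sincr_comp; auto. }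
      apply (UL_sequence (fun n => al * x (th n) + be * w (th n))).
      * apply (cv_sub (fun n => al * x (phi n) + be * w (phi n)) c (fun n => psi (chi n))); auto.
        apply sincr_comp; auto.
      * apply CV_plus; apply cv_scal; auto.
        apply (cv_sub (fun n => x (phi (psi n)))); auto.
  - intros [a [b [[phi [Hp [Ha Hb]]] ->]]].
    exists phi; split; auto. apply CV_plus; apply cv_scal; auto.
Qed.

Lemma joint_acc x w a b : joint x w a b -> acc_point x a /\ acc_point w b.
Proof. intros [phi [Hp [Ha Hb]]]; split; exists phi; auto. Qed.

Lemma fiber x w a : bounded w -> acc_point x a -> exists b, joint x w a b.
Proof.
  intros Bw [phi [Hp Ha]].
  destruct (BW _ (bounded_sub w phi Bw)) as [psi [b [Hpsi Hb]]].
  exists b, (fun n => phi (psi n)). split; [apply sincr_comp; auto|split; auto].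
  apply (cv_sub (fun n => x (phi n))); auto.
Qed.

Lemma has_card_unique S k1 k2 : has_card S k1 -> has_card S k2 -> k1 = k2.
Proof.
  intros [l1 [N1 [L1 I1]]] [l2 [N2 [L2 I2]]].
  assert (length l1 <= length l2)%nat.
  { apply NoDup_incl_length; auto. intros a Ha. apply I2, I1, Ha. }
  assert (length l2 <= length l1)%nat.
  { apply NoDup_incl_length; auto. intros a Ha. apply I1, I2, Ha. }
  lia.
Qed.

Lemma acc_zero c : acc_point zero_seq c <-> c = 0.
Proof.
  split.
  - intros [phi [_ H]]. apply (UL_sequence (fun _ => 0)); auto.
    intros e He; exists O; intros; unfold R_dist; rewrite Rminus_diag, Rabs_R0; lra.
  - intros ->. exists (fun n => n). split; [intros; lia|].
    intros e He; exists O; intros; unfold R_dist, zero_seq; rewrite Rminus_diag, Rabs_R0; lra.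
Qed.

Lemma card_zero : has_card (acc_point zero_seq) 1.
Proof.
  exists (0 :: nil). split; [constructor; [simpl; tauto|constructor]|split; auto].
  intros a. rewrite acc_zero. simpl. split; [intros [H|[]]; auto|intros; left; auto].
Qed.

Lemma max_pred (P : R -> Prop) l : (exists a, In a l /\ P a) ->
  exists p, In p l /\ P p /\ forall a, In a l -> P a -> a <= p.
Proof.
  induction l as [|c l IH]; intros [a [Ha Pa]]; [destruct Ha|].
  destruct (classic (exists a, In a l /\ P a)) as [Hex|Hn].
  - destruct (IH Hex) as [p [Hp [Pp Hmax]]].
    destruct (classic (P c /\ p <= c)) as [[Pc Hc]|Hc].
    + exists c. split; [left; auto|split; auto]. intros b [<-|Hb] Pb; [lra|].
      specialize (Hmax b Hb Pb); lra.
    + exists p. split; [right; auto|split; auto]. intros b [<-|Hb] Pb; auto.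
      apply Rnot_lt_le; intros Hlt; apply Hc; split; auto; lra.
  - destruct Ha as [->|Ha]; [|exfalso; apply Hn; eauto].
    exists a. split; [left; auto|split; auto]. intros b [<-|Hb] Pb; [lra|].
    exfalso; apply Hn; eauto.
Qed.

Lemma min_pred (P : R -> Prop) l : (exists a, In a l /\ P a) ->
  exists p, In p l /\ P p /\ forall a, In a l -> P a -> p <= a.
Proof.
  intros [a [Ha Pa]].
  destruct (max_pred (fun b => P (- b)) (map Ropp l)) as [p [Hp [Pp Hm]]].
  { exists (-a). split; [apply in_map; auto|rewrite Ropp_involutive; auto]. }
  apply in_map_iff in Hp. destruct Hp as [p' [<- Hp']].
  exists p'. split; auto. split; [rewrite Ropp_involutive in Pp; auto|].
  intros b Hb Pb. assert (In (-b) (map Ropp l)) by (apply in_map; auto).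
  specialize (Hm (-b) H). rewrite Ropp_involutive in Hm. specialize (Hm Pb). lra.
Qed.

Lemma gap_point l a : exists g, g > 0 /\ forall b, In b l -> a <> b -> g <= Rabs (a - b).
Proof.
  induction l as [|c l [g [Hg IH]]].
  - exists 1; split; [lra|intros b []].
  - destruct (Req_dec_T a c) as [->|Hac].
    + exists g; split; auto. intros b [<-|Hb] Hne; [congruence|auto].
    + exists (Rmin g (Rabs (a - c))). split.
      * apply Rmin_glb_lt; auto. apply Rabs_pos_lt. lra.
      * intros b [<-|Hb] Hne; [apply Rmin_r|]. eapply Rle_trans; [apply Rmin_l|auto].
Qed.

Lemma gap_list l : exists g, g > 0 /\ forall a b, In a l -> In b l -> a <> b -> g <= Rabs (a - b).
Proof.
  induction l as [|c l [g [Hg IH]]].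
  - exists 1; split; [lra|intros a b []].
  - destruct (gap_point l c) as [g2 [Hg2 H2]].
    exists (Rmin g g2). split; [apply Rmin_glb_lt; auto|].
    intros a b [<-|Ha] [<-|Hb] Hne.
    + congruence.
    + eapply Rle_trans; [apply Rmin_r|auto].
    + eapply Rle_trans; [apply Rmin_r|]. rewrite Rabs_minus_sym. apply H2; auto.
    + eapply Rle_trans; [apply Rmin_l|auto].
Qed.

Lemma filter_notin {T} (dec : forall x y : T, {x = y} + {x <> y}) (l : list T) s :
  ~ In s l -> filter (fun u => if dec u s then false else true) l = l.
Proof.
  induction l as [|c l IH]; intros Hs; simpl; auto.
  destruct (dec c s) as [->|]; [exfalso; apply Hs; left; auto|].
  rewrite IH; auto. intros H; apply Hs; right; auto.
Qed.

Lemma filter_remove_length {T} (dec : forall x y : T, {x = y} + {x <> y}) (l : list T) s :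
  NoDup l -> In s l ->
  (length (filter (fun u => if dec u s then false else true) l) + 1 = length l)%nat.
Proof.
  induction l as [|c l IH]; intros Hn Hs; [destruct Hs|].
  inversion Hn; subst. simpl. destruct (dec c s) as [->|Hcs].
  - rewrite filter_notin; auto. lia.
  - destruct Hs as [<-|Hs]; [congruence|]. simpl. rewrite IH; auto.
Qed.

Lemma INR_sep (a b : nat) : a <> b -> 1 <= Rabs (INR a - INR b).
Proof.
  intros H. destruct (Nat.lt_gt_cases a b) as [[Hl|Hl] _]; auto.
  - apply le_INR in Hl. rewrite S_INR in Hl. rewrite Rabs_minus_sym, Rabs_pos_eq; lra.
  - apply le_INR in Hl. rewrite S_INR in Hl. rewrite Rabs_pos_eq; lra.
Qed.

Lemma many_acc (A : nat -> Prop) (V : rseq -> Prop) :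
  (forall x, V x -> Defs.bounded x) -> dense_in_linf V ->
  (forall x, V x -> in_LA A x \/ x = zero_seq) ->
  forall N : nat, exists x lx, V x /\ Defs.bounded x /\ NoDup lx /\
     (forall a, In a lx <-> acc_point x a) /\ (N + 3 <= length lx)%nat.
Proof.
  intros Vb Vd VL N.
  set (K := (N + 3)%nat).
  set (z := fun k : nat => 3 * INR (k mod K)).
  assert (Bz : Defs.bounded z).
  { exists (3 * INR K). intros k. unfold z. rewrite Rabs_pos_eq.
    - apply Rmult_le_compat_l; [lra|]. apply le_INR.
      pose proof (Nat.mod_upper_bound k K ltac:(unfold K; lia)). lia.
    - pose proof (pos_INR (k mod K)); lra. }
  destruct (Vd z Bz 1 ltac:(lra)) as [y [Vy Hy]].
  pose proof (Vb y Vy) as By.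
  assert (Hc : forall j : nat, exists c, (j < K)%nat -> acc_point y c /\ Rabs (c - 3 * INR j) <= 1).
  { intros j. destruct (lt_dec j K) as [Hj|Hj]; [|exists 0; intros; lia].
    set (sub := fun i : nat => (j + i * K)%nat).
    assert (Hs : sincr sub) by (intros i; unfold sub; simpl; lia).
    destruct (BW _ (bounded_sub y sub By)) as [psi [c [Hpsi Hcv]]].
    exists c. intros _. split.
    - exists (fun n => sub (psi n)). split; [apply (sincr_comp sub psi); auto|exact Hcv].
    - assert (Hb : 3 * INR j - 1 <= c <= 3 * INR j + 1).
      { apply (cv_bounds _ _ _ _ Hcv). exists O. intros n _.
        specialize (Hy (sub (psi n))). unfold z, sub in Hy.
        rewrite Nat.Div0.mod_add, Nat.mod_small in Hy by auto.
        apply abs_le_inv in Hy. unfold sub. lra. }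
      apply Rabs_le. lra. }
  set (cf := fun j => proj1_sig (constructive_indefinite_description _ (Hc j))).
  assert (Hcf : forall j, (j < K)%nat -> acc_point y (cf j) /\ Rabs (cf j - 3 * INR j) <= 1).
  { intros j. unfold cf. destruct constructive_indefinite_description; auto. }
  assert (Hy0 : y <> zero_seq).
  { intros ->. specialize (Hy 1%nat). unfold z, zero_seq in Hy.
    rewrite Nat.mod_small in Hy by (unfold K; lia). simpl in Hy.
    rewrite Rminus_0_r, Rabs_pos_eq in Hy; lra. }
  destruct (VL y Vy) as [[_ [k [_ [ly [NDy [Ly Iy]]]]]]|]; [|congruence].
  exists y, ly. split; auto. split; auto. split; auto. split; auto.
  assert (ND : NoDup (map cf (seq 0 K))).
  { apply NoDup_map_NoDup_ForallPairs; [|apply seq_NoDup].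
    intros a b Ha Hb Heq. apply in_seq in Ha, Hb.
    destruct (Nat.eq_dec a b) as [|Hne]; auto. exfalso.
    apply INR_sep in Hne.
    destruct (Hcf a ltac:(lia)) as [_ H1]. destruct (Hcf b ltac:(lia)) as [_ H2].
    rewrite Heq in H1. apply abs_le_inv in H1, H2.
    assert (Rabs (INR a - INR b) <= 2/3) by (apply Rabs_le; lra). lra. }
  pose proof (fun H => NoDup_incl_length (l:=map cf (seq 0 K)) (l':=ly) ND H) as Hl.
  rewrite length_map, length_seq in Hl. apply Hl.
  intros c Hc'. apply in_map_iff in Hc'. destruct Hc' as [j [<- Hj]].
  apply in_seq in Hj. apply Iy. apply Hcf. lia.
Qed.

Lemma decRR : forall u v : R * R, {u = v} + {u <> v}.
Proof. decide equality; apply Req_dec_T. Qed.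

Lemma part1 A : ~ A 1%nat -> densely_lineable (in_LA A) -> infinite_nat (fun n => A n /\ A (S n)).
Proof.
  intros HA1 [V [[Vb [V0 [Vadd Vsc]]] [_ [Vd VL]]]] N.
  destruct (many_acc A V Vb Vd VL N) as [x [lx [Vx [Bx [NDx [Ix Lx]]]]]].
  destruct (max_pred (fun _ => True) lx) as [p [Hp [_ Hpmax]]].
  { destruct lx as [|a0 l]; [simpl in Lx; lia|]. exists a0; split; [left|]; auto. }
  destruct (max_pred (fun a => a <> p) lx) as [q [Hq [Hqp Hqmax]]].
  { destruct lx as [|a0 [|a1 l]]; simpl in Lx; try lia.
    inversion NDx; subst.
    destruct (Req_dec_T a0 p) as [->|H0].
    - exists a1. split; [right; left; auto|]. intros ->. apply H1; left; auto.
    - exists a0. split; [left|]; auto. }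
  destruct (gap_list lx) as [g [Hg Hgap]].
  set (d := p - q).
  assert (Hqle : q <= p) by (apply Hpmax; auto).
  assert (Hdg : g <= d).
  { pose proof (Hgap p q Hp Hq (not_eq_sym Hqp)). unfold d. rewrite Rabs_pos_eq in H; lra. }
  assert (Hd : d > 0) by lra.
  assert (Hle_q : forall a, In a lx -> a <> p -> a <= q) by (intros; apply Hqmax; auto).
  assert (Hle_qg : forall a, In a lx -> a <> p -> a <> q -> a <= q - g).
  { intros a Ha H1 H2. pose proof (Hle_q a Ha H1). pose proof (Hgap a q Ha Hq H2).
    rewrite Rabs_minus_sym, Rabs_pos_eq in H0; lra. }
  set (M := 4 * d / g + 3).
  assert (HMg : M * g = 4 * d + 3 * g) by (unfold M; field; lra).
  assert (HM3 : M > 3).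
  { unfold M. assert (0 < 4 * d / g) by (apply Rdiv_lt_0_compat; lra). lra. }
  set (t := fun k => if Rlt_dec (Rabs (x k - p)) (d / 2) then M else 0).
  assert (Bt : Defs.bounded t).
  { exists M. intros k. unfold t. destruct Rlt_dec; [rewrite Rabs_pos_eq|rewrite Rabs_R0]; lra. }
  destruct (Vd t Bt 1 ltac:(lra)) as [w [Vw Hw]].
  pose proof (Vb w Vw) as Bw.
  assert (Hlw : exists lw, forall b, acc_point w b -> In b lw).
  { destruct (VL w Vw) as [[_ [k [_ [lw [_ [_ Iw]]]]]]| ->].
    - exists lw. intros b Hb; apply Iw; auto.
    - exists (0 :: nil). intros b Hb. apply acc_zero in Hb. left; auto. }
  destruct Hlw as [lw Iw].
  assert (Jfst : forall a b, joint x w a b -> In a lx).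
  { intros a b H. apply Ix. apply (joint_acc _ _ _ _ H). }
  assert (Jsnd : forall a b, joint x w a b -> In b lw).
  { intros a b H. apply Iw. apply (joint_acc _ _ _ _ H). }
  assert (Jp : forall b, joint x w p b -> M - 1 <= b <= M + 1).
  { intros b [phi [Hphi [Ha Hb]]]. apply (cv_bounds _ _ _ _ Hb).
    destruct (cv_eventually _ _ (d/2) Ha ltac:(lra)) as [N0 HN0]. exists N0.
    intros n Hn. specialize (HN0 n Hn). specialize (Hw (phi n)). unfold t in Hw.
    destruct Rlt_dec; [|contradiction]. apply abs_le_inv in Hw. lra. }
  assert (Jnp : forall a b, joint x w a b -> a <> p -> -1 <= b <= 1).
  { intros a b HJ Hap. pose proof (Hle_q a (Jfst a b HJ) Hap).
    destruct HJ as [phi [Hphi [Ha Hb]]]. apply (cv_bounds _ _ _ _ Hb).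
    destruct (cv_eventually _ _ (d/2) Ha ltac:(lra)) as [N0 HN0]. exists N0.
    intros n Hn. specialize (HN0 n Hn). specialize (Hw (phi n)). unfold t in Hw.
    apply abs_lt_inv in HN0.
    destruct Rlt_dec as [Hr|]. { apply abs_lt_inv in Hr. unfold d in *. lra. }
    rewrite Rminus_0_l, Rabs_Ropp in Hw. apply abs_le_inv in Hw. lra. }
  assert (Jall : forall a b, joint x w a b -> -1 <= b <= M + 1).
  { intros a b HJ. destruct (Req_dec_T a p) as [->|Hap].
    - apply Jp in HJ; lra.
    - apply Jnp in HJ; auto; lra. }
  destruct (max_pred (joint x w p) lw) as [bmax [_ [Hr Hrmax]]].
  { destruct (fiber x w p Bw (proj1 (Ix p) Hp)) as [b Hb]. exists b; split; eauto. }
  destruct (min_pred (joint x w q) lw) as [bmin [_ [Hs Hsmin]]].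
  { destruct (fiber x w q Bw (proj1 (Ix q) Hq)) as [b Hb]. exists b; split; eauto. }
  set (h := bmax - bmin).
  assert (Hh : h >= M - 2).
  { pose proof (Jp _ Hr). pose proof (Jnp _ _ Hs Hqp). unfold h; lra. }
  set (J := nodup decRR (filter (fun pr => if excluded_middle_informative (joint x w (fst pr) (snd pr)) then true else false) (list_prod lx lw))).
  assert (IJ : forall a b, In (a, b) J <-> joint x w a b).
  { intros a b. unfold J. rewrite nodup_In, filter_In, in_prod_iff. simpl.
    destruct excluded_middle_informative as [H|H]; split; intros HH; try tauto.
    - split; [split; eauto|auto].
    - destruct HH as [_ HH]; discriminate. }
  assert (NDJ : NoDup J) by apply NoDup_nodup.
  assert (LJ : (length lx <= length J)%nat).
  { rewrite <- (length_map fst J). apply NoDup_incl_length; auto.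
    intros a Ha. destruct (fiber x w a Bw (proj1 (Ix a) Ha)) as [b Hb].
    apply in_map_iff. exists (a, b). split; auto. apply IJ; auto. }
  set (Kc := (M + 3) / g).
  assert (HKg : Kc * g = M + 3) by (unfold Kc; field; lra).
  assert (HK : Kc > 0) by (unfold Kc; apply Rdiv_lt_0_compat; lra).
  set (Fe := fun pr : R * R => Kc * fst pr + 1 * snd pr).
  assert (Ce : has_card (acc_point (fun n => Kc * x n + 1 * w n)) (length J)).
  { exists (map Fe J). split; [|split; [apply length_map|]].
    - apply NoDup_map_NoDup_ForallPairs; auto.
      intros [a1 b1] [a2 b2] H1 H2 Heq. apply IJ in H1, H2. unfold Fe in Heq; simpl in Heq.
      destruct (Req_dec_T a1 a2) as [->|Hne].
      + f_equal. lra.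
      + exfalso. pose proof (Hgap a1 a2 (Jfst _ _ H1) (Jfst _ _ H2) Hne).
        pose proof (Jall _ _ H1). pose proof (Jall _ _ H2).
        assert (Kc * Rabs (a1 - a2) = Rabs (b2 - b1)).
        { rewrite <- (Rabs_pos_eq Kc) by lra. rewrite <- Rabs_mult. f_equal. lra. }
        assert (Rabs (b2 - b1) <= M + 2) by (apply Rabs_le; lra).
        assert (Kc * g <= Kc * Rabs (a1 - a2)) by (apply Rmult_le_compat_l; lra).
        lra.
    - intros c. rewrite comb_acc by auto. rewrite in_map_iff. split.
      + intros [[a b] [<- HJ]]. exists a, b. split; [apply IJ; auto|reflexivity].
      + intros [a [b [HJ ->]]]. exists (a, b). split; [reflexivity|apply IJ; auto]. }
  set (Ff := fun pr : R * R => h * fst pr + (- d) * snd pr).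
  assert (Coll : forall a1 b1 a2 b2, joint x w a1 b1 -> joint x w a2 b2 ->
            Ff (a1, b1) = Ff (a2, b2) -> (a1, b1) <> (a2, b2) ->
            ((a1, b1) = (p, bmax) /\ (a2, b2) = (q, bmin)) \/
            ((a1, b1) = (q, bmin) /\ (a2, b2) = (p, bmax))).
  { intros a1 b1 a2 b2 H1 H2 Heq Hne. unfold Ff in Heq; simpl in Heq.
    assert (Hlin : h * (a1 - a2) = d * (b1 - b2)) by lra.
    destruct (Req_dec_T a1 a2) as [<-|Ha12].
    { exfalso. apply Hne. f_equal. replace (a1 - a1) with 0 in Hlin by ring.
      assert (d * (b1 - b2) = 0) by lra.
      apply Rmult_integral in H. destruct H; lra. }
    assert (Gen : forall a1 b1 a2 b2, joint x w a1 b1 -> joint x w a2 b2 ->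
              a1 = p -> a2 <> p -> h * (a1 - a2) = d * (b1 - b2) ->
              a2 = q /\ b1 = bmax /\ b2 = bmin).
    { clear a1 b1 a2 b2 H1 H2 Heq Hne Hlin Ha12.
      intros a1 b1 a2 b2 H1 H2 -> Ha2 Hlin.
      pose proof (Jp _ H1). pose proof (Jnp _ _ H2 Ha2).
      destruct (Req_dec_T a2 q) as [->|Ha2q].
      - replace (p - q) with d in Hlin by reflexivity.
        assert (h = b1 - b2).
        { apply (Rmult_eq_reg_l d); [|lra]. lra. }
        pose proof (Hrmax b1 (Jsnd _ _ H1) H1). pose proof (Hsmin b2 (Jsnd _ _ H2) H2).
        unfold h in *. repeat split; lra.
      - exfalso. pose proof (Hle_qg a2 (Jfst _ _ H2) Ha2 Ha2q).
        assert (Hx1 : (M - 2) * (d + g) <= h * (p - a2)).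
        { apply Rmult_le_compat; unfold d in *; lra. }
        assert (Hx2 : d * (b1 - b2) <= d * (M + 2)) by (apply Rmult_le_compat_l; lra).
        assert (Hx3 : (M - 2) * (d + g) - d * (M + 2) = g) by nra.
        lra. }
    destruct (Req_dec_T a1 p) as [Ha1p|Ha1p]; destruct (Req_dec_T a2 p) as [Ha2p|Ha2p].
    - exfalso; apply Ha12; congruence.
    - destruct (Gen a1 b1 a2 b2 H1 H2 Ha1p Ha2p Hlin) as [-> [-> ->]].
      left; subst; auto.
    - destruct (Gen a2 b2 a1 b1 H2 H1 Ha2p Ha1p ltac:(lra)) as [-> [-> ->]].
      right; subst; auto.
    - exfalso. pose proof (Jnp _ _ H1 Ha1p). pose proof (Jnp _ _ H2 Ha2p).
      pose proof (Hgap a1 a2 (Jfst _ _ H1) (Jfst _ _ H2) Ha12).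
      assert (h * Rabs (a1 - a2) = d * Rabs (b1 - b2)).
      { rewrite <- (Rabs_pos_eq h) by lra. rewrite <- (Rabs_pos_eq d) by lra.
        rewrite <- !Rabs_mult. f_equal. lra. }
      assert (Rabs (b1 - b2) <= 2) by (apply Rabs_le; lra).
      assert (h * g <= h * Rabs (a1 - a2)) by (apply Rmult_le_compat_l; lra).
      assert (d * Rabs (b1 - b2) <= d * 2) by (apply Rmult_le_compat_l; lra).
      assert ((M - 2) * g <= h * g) by (apply Rmult_le_compat_r; lra).
      nra. }
  set (sv := (q, bmin)). set (rv := (p, bmax)).
  set (J' := filter (fun u => if decRR u sv then false else true) J).
  assert (LJ' : (length J' + 1 = length J)%nat).
  { apply filter_remove_length; auto. apply IJ; auto. }
  assert (Hrs : rv <> sv) by (unfold rv, sv; intros H; inversion H; auto).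
  assert (HFrs : Ff rv = Ff sv).
  { unfold Ff, rv, sv; simpl. unfold h, d. ring. }
  assert (IJ' : forall u, In u J' <-> In u J /\ u <> sv).
  { intros u. unfold J'. rewrite filter_In. destruct decRR; intuition; discriminate. }
  assert (Cf : has_card (acc_point (fun n => h * x n + (- d) * w n)) (length J')).
  { exists (map Ff J'). split; [|split; [apply length_map|]].
    - apply NoDup_map_NoDup_ForallPairs; [|unfold J'; apply NoDup_filter; auto].
      intros [a1 b1] [a2 b2] H1 H2 Heq. apply IJ' in H1, H2.
      destruct H1 as [H1 N1], H2 as [H2 N2]. apply IJ in H1, H2.
      destruct (decRR (a1, b1) (a2, b2)) as [|Hne]; auto. exfalso.
      destruct (Coll a1 b1 a2 b2 H1 H2 Heq Hne) as [[_ E]|[E _]]; contradiction.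
    - intros c. rewrite comb_acc by auto. rewrite in_map_iff. split.
      + intros [[a b] [<- HJ]]. apply IJ' in HJ. exists a, b. split; [apply IJ; tauto|reflexivity].
      + intros [a [b [HJ ->]]]. destruct (decRR (a, b) sv) as [E|E].
        * exists rv. split; [rewrite HFrs, <- E; reflexivity|].
          apply IJ'. split; auto. apply IJ. exact Hr.
        * exists (a, b). split; [reflexivity|apply IJ'; split; auto; apply IJ; auto]. }
  assert (Ve : V (fun n => Kc * x n + 1 * w n)) by (apply Vadd; apply Vsc; auto).
  assert (Vf : V (fun n => h * x n + (- d) * w n)) by (apply Vadd; apply Vsc; auto).
  assert (Ae : A (length J)).
  { destruct (VL _ Ve) as [[_ [k [Ak Ck]]]|E].
    - rewrite (has_card_unique _ _ _ Ce Ck); auto.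
    - rewrite E in Ce. pose proof (has_card_unique _ _ _ Ce card_zero). lia. }
  assert (Af : A (length J')).
  { destruct (VL _ Vf) as [[_ [k [Ak Ck]]]|E].
    - rewrite (has_card_unique _ _ _ Cf Ck); auto.
    - rewrite E in Cf. pose proof (has_card_unique _ _ _ Cf card_zero). lia. }
  exists (length J'). split; [lia|]. split; auto.
  replace (S (length J')) with (length J) by lia. auto.
Qed.

Theorem theorem2p7 :
  (forall A : nat -> Prop, ~ A 1%nat ->
     densely_lineable (in_LA A) ->
     infinite_nat (fun n => A n /\ A (S n)))
  /\ ~ densely_lineable (in_LA odd_set)
  /\ ~ densely_lineable (in_LA even_set).
Proof.
  split; [exact part1|split].
  - intros H. destruct (part1 odd_set ltac:(intros [m [Hm E]]; lia) H O)
      as [n [_ [[m1 [_ E1]] [m2 [_ E2]]]]]. lia.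
  - intros H. destruct (part1 even_set ltac:(intros [m [Hm E]]; lia) H O)
      as [n [_ [[m1 [_ E1]] [m2 [_ E2]]]]]. lia.
Qed.
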